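(* Let $(\Omega,\mathcal{F},\mathbb{P})$ be a nonatomic probability space, let $u:\mathbb{R}\to\mathbb{R}\cup\{-\infty\}$ be a utility function bounded from above, let $\alpha\in\mathbb{R}$ be such that $u(x)\ge\alpha$ for some $x\in\mathbb{R}$, and fix $1\le p<\infty$. Assume one of the following conditions: (i) $u(x)\le\alpha$ for all $x\in\mathbb{R}$; (ii) $\lim_{x\to\infty}\frac{x^p}{u(-x)}=0$. Then the set $\mathcal{A}_u^p=\{X\in L^p: \mathbb{E}[u(X)]\ge\alpha\}$ has empty interior in $L^p$.
   Context: A utility function is a nonconstant, increasing, concave function $u:\mathbb{R}\to\mathbb{R}\cup\{-\infty\}$. $L^p=L^p(\Omega,\mathcal{F},\mathbb{P})$ with its norm topology. *)

(* Defs.v *)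
From HB Require Import structures.
From mathcomp Require Import all_boot all_order all_algebra.
From mathcomp Require Import all_classical all_reals all_analysis.
Set Implicit Arguments. Unset Strict Implicit. Unset Printing Implicit Defensive.
Import Order.TTheory GRing.Theory Num.Theory.
Import numFieldNormedType.Exports.
Local Open Scope classical_set_scope.
Local Open Scope ring_scope.

Definition nonatomic d (T : measurableType d) (R : realType)
    (P : probability T R) : Prop :=
  forall A : set T, measurable A -> (0 < P A)%E ->
    exists B : set T, [/\ measurable B, B `<=` A, (0 < P B)%E & (P B < P A)%E].

Definition utility (R : realType) (u : R -> \bar R) : Prop :=
  [/\ (forall x : R, u x != +oo%E),
      (exists x y, u x != u y),
      (forall x y : R, x <= y -> (u x <= u y)%E) &
      (forall x y t : R, (0 < t)%R -> (t < 1)%R ->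
         (t%:E * u x + (1 - t)%R%:E * u y <= u (t * x + (1 - t) * y)%R)%E)].

(* L^p(Ω,F,P) as a set of real random variables: measurable with finite
   p-norm.  (The norm topology is invariant under a.e. equality.) *)
Definition Lp d (T : measurableType d) (R : realType) (P : probability T R)
    (p : R) : set (T -> R) := [set X | X \in Lfun P p%:E].

Definition Lp_dist d (T : measurableType d) (R : realType)
    (P : probability T R) (p : R) (X Y : T -> R) : \bar R :=
  'N[P]_p%:E [EFin \o (Y \- X)].

Definition acceptance_set d (T : measurableType d) (R : realType)
    (P : probability T R) (u : R -> \bar R) (p alpha : R) : set (T -> R) :=
  [set X | Lp P p X /\ (alpha%:E <= \int[P]_w u (X w))%E].

Definition Lp_interior d (T : measurableType d) (R : realType)
    (P : probability T R) (p : R) (S : set (T -> R)) : set (T -> R) :=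
  [set X | Lp P p X /\ exists2 e : R, 0 < e &
     forall Y, Lp P p Y -> (Lp_dist P p X Y < e%:E)%E -> S Y].

(* Main.v *)
Require Import Defs.
From HB Require Import structures.
From mathcomp Require Import all_boot all_order all_algebra.
From mathcomp Require Import all_classical all_reals all_analysis.
From mathcomp Require Import lra.
Import Order.TTheory GRing.Theory Num.Theory.
Import numFieldNormedType.Exports.
Local Open Scope classical_set_scope.
Local Open Scope ring_scope.
Lemma le_integral_any d (T : measurableType d) (R : realType)
  (mu : {measure set T -> \bar R}) (f g : T -> \bar R) :
  (forall x, (f x <= g x)%E) -> (\int[mu]_x f x <= \int[mu]_x g x)%E.
Proof.
move=> fg; rewrite /integral; apply: leeB.
  apply: ereal_sup_le => _ /= [h hf <-]; exists h => // x.
  apply: (le_trans (hf x)); apply: (@funepos_le _ _ setT); last by rewrite mem_setT.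
  by move=> y _; rewrite /patch mem_setT.
apply: ereal_sup_le => _ /= [h hf <-]; exists h => // x.
apply: (le_trans (hf x)); apply: (@funeneg_le _ _ setT); last by rewrite mem_setT.
by move=> y _; rewrite /patch mem_setT.
Qed.
Lemma step_integral d (T : measurableType d) (R : realType)
  (P : probability T R) (B : set T) (a b m : R) :
  measurable B -> P B = m%:E ->
  (\int[P]_x (a + b * \1_B x)%:E = (a + b * m)%:E)%E.
Proof.
move=> mB PB.
under eq_integral do rewrite EFinD EFinM.
rewrite integralD//; last 2 first.
- exact: finite_measure_integrable_cst.
- by apply: integrableZl => //; exact: integrable_indic.
rewrite integralZl//; last exact: integrable_indic.
rewrite integral_indic// setIT.
have -> : (\int[P]_x a%:E = a%:E)%E.
  rewrite (_ : (fun x => a%:E) = cst a%:E)// integral_cst//.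
  by have := probability_setT P => /= ->; rewrite mule1.
set z := (X in (b%:E * X)%E); have -> : z = m%:E by exact: PB.
by rewrite -EFinM -EFinD.
Qed.

Lemma norm_step d (T : measurableType d) (R : realType)
  (P : probability T R) (B : set T) (c m p : R) :
  measurable B -> P B = m%:E -> 0 <= c -> 0 < p ->
  ('N[P]_p%:E [EFin \o (fun w => (- c * \1_B w)%R)] = ((c `^ p * m) `^ p^-1)%:E)%E.
Proof.
move=> mB PB c0 p0.
rewrite unlock /=.
have -> : (\int[P]_x ((`|(- c * \1_B x)| `^ p)%:E) = (0 + c `^ p * m)%:E)%E.
  rewrite -(@step_integral _ _ _ P B 0 (c `^ p) m mB PB); apply: eq_integral => x _.
  rewrite normrM normrN ger0_norm// ger0_norm//.
  rewrite /indic; case: (x \in B) => /=.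
    by rewrite !mulr1 add0r.
  by rewrite !mulr0 add0r powR0// gt_eqF.
by rewrite add0r poweR_EFin.
Qed.

Lemma step_Lfun d (T : measurableType d) (R : realType)
  (P : probability T R) (B : set T) (c m p : R) :
  measurable B -> P B = m%:E -> 0 <= c -> 0 < p ->
  (fun w => - c * \1_B w) \in Lfun P p%:E.
Proof.
move=> mB PB c0 p0.
apply/andP; split.
  rewrite inE; apply: measurable_realfun.measurable_funM => //.
rewrite inE /= /finite_norm (@norm_step _ _ _ P B c m p mB PB) //.
exact: ltry.
Qed.

Lemma core d (T : measurableType d) (R : realType)
  (P : probability T R) (u : R -> \bar R) (alpha p : R) (X : T -> R)
  (B : set T) (c m M' v e K0 : R) :
  1 <= p -> Lp P p X -> measurable B -> P B = m%:E ->
  B `<=` [set w | X w <= K0] -> 0 <= c ->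
  (c `^ p * m) `^ p^-1 < e ->
  (forall x y : R, x <= y -> (u x <= u y)%E) ->
  (forall x, (u x <= M'%:E)%E) -> (u (K0 - c)%R <= v%:E)%E ->
  M' + (v - M') * m < alpha ->
  exists Y, [/\ Lp P p Y, (Lp_dist P p X Y < e%:E)%E &
     ~ acceptance_set P u p alpha Y].
Proof.
move=> p1 LX mB PB BX c0 ce umono uM uv vlt.
have p0 : 0 < p by apply: lt_le_trans p1.
have LZ := @step_Lfun _ _ _ P B c m p mB PB c0 p0.
pose Y := fun w => X w + (- c * \1_B w).
exists Y; split.
- rewrite /Lp /=.
  have p1' : (1 <= p%:E)%E by rewrite lee_fin.
  exact: ((Lfun_addr_closed P p1').2 X _ LX LZ).
- rewrite /Lp_dist.
  rewrite (@eq_Lnorm _ _ _ P p%:E _ (EFin \o (fun w => - c * \1_B w))).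
    by rewrite (@norm_step _ _ _ P B c m p mB PB c0 p0) lte_fin.
  by move=> w /=; rewrite /Y [X w + _]addrC addrK.
- move=> [_ H].
  have : (\int[P]_w u (Y w) <= (M' + (v - M') * m)%:E)%E.
    rewrite -(@step_integral _ _ _ P B M' (v - M') m mB PB).
    apply: le_integral_any => w.
    rewrite /indic; case: (boolP (w \in B)) => wB /=.
      rewrite mulr1 addrC subrK; apply: (le_trans _ uv); apply: umono.
      rewrite /Y /indic wB /= mulr1 lerD2r; apply: BX; exact: set_mem wB.
    by rewrite mulr0 addr0.
  move=> /(le_trans H); rewrite lee_fin => /(lt_le_trans vlt).
  by rewrite ltxx.
Qed.

Section small.
Context d (T : measurableType d) (R : realType) (P : probability T R).

Lemma Pfin {A} : measurable A -> P A = (fine (P A))%:E.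
Proof. by move=> mA; rewrite fineK// fin_num_measure. Qed.

Lemma Pfin_le1 {A} : measurable A -> fine (P A) <= 1.
Proof.
move=> mA; have := probability_le1 P mA; rewrite (Pfin mA) lee_fin //.
Qed.

Lemma halve {A} : nonatomic P -> measurable A -> (0 < P A)%E ->
  exists B, [/\ measurable B, B `<=` A, (0 < P B)%E &
    2 * fine (P B) <= fine (P A)].
Proof.
move=> na mA PA0; have [C [mC CA C0 CA']] := na A mA PA0.
rewrite (Pfin mA) (Pfin mC) !lte_fin in C0 CA'.
have [h|h] := leP (2 * fine (P C)) (fine (P A)).
  by exists C; split => //; rewrite (Pfin mC) lte_fin.
have PD : P (A `\` C) = (fine (P A) - fine (P C))%:E.
  rewrite measureD//; first by rewrite setIidr// EFinB !fineK// fin_num_measure.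
  by rewrite ltey_eq fin_num_measure.
exists (A `\` C); split.
- exact: measurableD.
- by move=> x [].
- by rewrite PD lte_fin subr_gt0.
- rewrite PD /=; lra.
Qed.

Lemma small_pow {A} : nonatomic P -> measurable A -> (0 < P A)%E ->
  forall n, exists B, [/\ measurable B, B `<=` A, (0 < P B)%E &
    fine (P B) * 2 ^+ n <= fine (P A)].
Proof.
move=> na mA PA0; elim => [|n [B [mB BA PB h]]].
  by exists A; split => //; rewrite expr0 mulr1.
have [C [mC CB PC h']] := halve na mB PB.
exists C; split => //; first exact: subset_trans BA.
apply: le_trans h; rewrite exprS mulrA; apply: ler_wpM2r.
  exact: exprn_ge0.
by rewrite mulrC.
Qed.

Lemma small_set {A} : nonatomic P -> measurable A -> (0 < P A)%E ->
  forall r : R, 0 < r -> exists B, [/\ measurable B, B `<=` A, (0 < P B)%E &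
    fine (P B) < r].
Proof.
move=> na mA PA0 r r0.
set n := Num.Def.archi_bound r^-1.
have hn : r^-1 < n%:R by apply: archi_boundP; rewrite invr_ge0 ltW.
have [B [mB BA PB h]] := small_pow na mA PA0 n.
exists B; split => //.
have h2 : n%:R < 2 ^+ n :> R.
  by rewrite -natrX ltr_nat ltn_expl.
have h1 : fine (P B) * 2 ^+ n <= 1 by apply: le_trans h (Pfin_le1 mA).
have h3 : 1 < r * 2 ^+ n.
  rewrite -[X in X < _](mulfV (lt0r_neq0 r0)) ltr_pM2l//.
  exact: lt_trans hn h2.
have e0 : 0 < 2 ^+ n :> R by apply: exprn_gt0.
rewrite -(ltr_pM2r e0); exact: le_lt_trans h1 h3.
Qed.

End small.

Lemma mlevel d (T : measurableType d) (R : realType) (X : T -> R) (r : R) :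
  measurable_fun setT X -> measurable [set w | X w <= r].
Proof.
move=> mX.
rewrite (_ : [set w | X w <= r] = setT `&` X @^-1` `]-oo, r]).
  exact: (mX measurableT _ (measurable_itv _)).
by rewrite setTI; apply/seteqP; split => w /=; rewrite in_itv /=.
Qed.

Lemma pos_level d (T : measurableType d) (R : realType) (P : probability T R)
  (X : T -> R) : measurable_fun setT X ->
  exists n : nat, (0 < P [set w | (X w <= n%:R)%R])%E.
Proof.
move=> mX; apply/not_existsP => H.
have H0 n : P [set w | X w <= n%:R] = 0%E.
  apply/eqP; rewrite eq_le measure_ge0 andbT.
  by rewrite leNgt; apply/negP => /(H n).
have cov : setT `<=` \bigcup_n [set w | X w <= n%:R].
  move=> w _; exists (Num.Def.archi_bound `|X w|) => //=.
  apply: ltW; apply: le_lt_trans (ler_norm _) _.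
  exact: archi_boundP.
have := @measure_sigma_subadditive _ _ _ P setT (fun n => [set w | X w <= n%:R])
  (fun n => @mlevel _ _ _ X n%:R mX) measurableT cov.
rewrite eseries0; last by move=> i _ _; exact: H0.
by have := probability_setT P => /= ->; rewrite lee_fin ler10.
Qed.
Section pw.
Context (R : realType).
Implicit Types a e p L : R.

Lemma pw_inv a p : 0 <= a -> 0 < p -> (a `^ p^-1) `^ p = a.
Proof. by move=> a0 p0; rewrite -powRrM mulVf ?lt0r_neq0// powRr1. Qed.

Lemma pw_inv' a p : 0 <= a -> 0 < p -> (a `^ p) `^ p^-1 = a.
Proof. by move=> a0 p0; rewrite -powRrM mulfV ?lt0r_neq0// powRr1. Qed.

Lemma root_lt a e p : 0 <= a -> 0 < e -> 0 < p -> a < e `^ p -> a `^ p^-1 < e.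
Proof.
move=> a0 e0 p0 ae.
have ip : 0 < p^-1 by rewrite invr_gt0.
have := @gt0_ltr_powR R p^-1 ip a (e `^ p).
rewrite pw_inv' ?ltW//; apply => //; rewrite nnegrE ?powR_ge0//.
Qed.

Lemma root_ge a L p : 0 <= L -> 0 < p -> L `^ p <= a -> L <= a `^ p^-1.
Proof.
move=> L0 p0 La.
have ip : 0 < p^-1 by rewrite invr_gt0.
have := @ge0_ler_powR R p^-1 (ltW ip) (L `^ p) a.
rewrite pw_inv'//; apply => //; rewrite nnegrE ?powR_ge0//.
exact: le_trans (powR_ge0 _ _) La.
Qed.
Lemma lin_contra a b c : a + 1 <= c -> c <= b -> b <= a -> False.
Proof. lra. Qed.
End pw.

Theorem lemma6p3 (d : measure_display) (T : measurableType d) (R : realType)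
  (P : probability T R) (u : R -> \bar R) (alpha p : R) :
  nonatomic P ->
  utility u ->
  (exists M : R, forall x, (u x <= M%:E)%E) ->
  (exists x, (alpha%:E <= u x)%E) ->
  1 <= p ->
  ((forall x, (u x <= alpha%:E)%E) \/
   (forall eps : R, 0 < eps ->
      \forall x \near +oo, ((x `^ p)%:E <= eps%:E * `| u (- x)%R |)%E)) ->
  Lp_interior P p (acceptance_set P u p alpha) = set0.
Proof.
move=> na [unoo [x1 [y1 uxy]] umono _] [M uM] [x0 ux0] p1 cond.
have p0 : 0 < p by apply: lt_le_trans p1.
apply/seteqP; split => // X [LX [e e0 Hball]].
have mX : measurable_fun setT X.
  have := sub_Lfun_mfun LX; rewrite inE; exact.
have [n Pn] := @pos_level _ _ _ P X mX.
have mA := @mlevel _ _ _ X n%:R mX.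
have fin : forall (B : set T) (c M' v K0 : R), measurable B -> (0 < P B)%E ->
    B `<=` [set w | X w <= K0] -> 0 <= c ->
    (c `^ p * fine (P B)) `^ p^-1 < e ->
    (forall x, (u x <= M'%:E)%E) -> (u (K0 - c)%R <= v%:E)%E ->
    M' + (v - M') * fine (P B) < alpha -> False.
  move=> B c M' v K0 mB PB0 BK c0 ce uM' uv vlt.
  have [Y [LY dY nY]] := @core _ _ _ P u alpha p X B c (fine (P B)) M' v e K0 p1 LX mB (@Pfin _ _ _ P B mB) BK c0 ce umono uM' uv vlt.
  by apply: nY; apply: Hball.
have mpos : forall B, measurable B -> (0 < P B)%E -> 0 < fine (P B).
  by move=> B mB; rewrite (@Pfin _ _ _ P B mB) lte_fin.
case: cond => [ualpha | grow].
  have [y0 uy0] : exists y0, (u y0 < alpha%:E)%E.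
    have := ualpha x1; rewrite le_eqVlt => /predU1P[h1|h1]; last by exists x1.
    have := ualpha y1; rewrite le_eqVlt => /predU1P[h2|h2]; last by exists y1.
    by move: uxy; rewrite h1 h2 eqxx.
  have [v [uv vlt]] : exists v : R, (u y0 <= v%:E)%E /\ v < alpha.
    move: (unoo y0) uy0; case: (u y0) => [r _ | // | _ _].
      by rewrite lte_fin => ra; exists r; split.
    by exists (alpha - 1); split; [exact: leNye | lra].
  pose K0 := Num.max n%:R y0; pose c := K0 - y0.
  have c0 : 0 <= c by rewrite subr_ge0 le_max lexx orbT.
  have cp0 := powR_ge0 c p.
  pose r := e `^ p / (c `^ p + 1).
  have r0 : 0 < r by apply: divr_gt0; [exact: powR_gt0 | lra].
  have hr : r * (c `^ p + 1) = e `^ p by rewrite /r divfK // gt_eqF //; lra.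
  have [B [mB BA PB0 PBr]] := @small_set _ _ _ P _ na mA Pn r r0.
  have m0 := mpos B mB PB0.
  apply: (fin B c alpha v K0 mB PB0).
  - move=> w /BA /= Xw; apply: (le_trans Xw); rewrite le_max lexx //.
  - exact: c0.
  - apply: root_lt => //; first by apply: mulr_ge0 => //; exact: ltW.
    rewrite -hr; nra.
  - exact: ualpha.
  - by rewrite /c opprB addrC subrK.
  - nra.
pose M' := Num.max M (Num.max 0 alpha).
have M'0 : 0 <= M' by rewrite le_max le_max lexx !orbT.
have M'a : alpha <= M' by rewrite le_max le_max lexx !orbT.
have MM' : M <= M' by rewrite le_max lexx.
have uM' : forall x, (u x <= M'%:E)%E.
  by move=> x; apply: (le_trans (uM x)); rewrite lee_fin.
have tp0 : 0 < 2 `^ p * 2 by apply: mulr_gt0 => //; exact: powR_gt0.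
pose t := e `^ p / (2 `^ p * 2).
have t0 : 0 < t by apply: divr_gt0 => //; exact: powR_gt0.
have ht : t * (2 `^ p * 2) = e `^ p by rewrite /t divfK // gt_eqF.
pose D := M' - alpha + 1.
have D0 : 0 < D by rewrite /D; lra.
pose eps := t / D.
have eps0 : 0 < eps by exact: divr_gt0.
have he : eps * D = t by rewrite /eps divfK // gt_eqF.
have [N [_ HN]] := grow eps eps0.
pose K0 : R := n%:R.
have K00 : 0 <= K0 by rewrite /K0.
pose L := Num.max (Num.max K0 (N + 1)) (Num.max (eps * M' + 1) 1).
have LK0 : K0 <= L by rewrite !le_max lexx.
have LN : N + 1 <= L by rewrite !le_max lexx !orbT.
have LM : eps * M' + 1 <= L by rewrite !le_max lexx !orbT.
have L1 : 1 <= L by rewrite !le_max lexx !orbT.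
have Lp0 : 0 < L `^ p by apply: powR_gt0; lra.
pose rr := t / L `^ p.
have rr0 : 0 < rr by exact: divr_gt0.
have [B [mB BA PB0 PBr]] := @small_set _ _ _ P _ na mA Pn rr rr0.
pose m := fine (P B).
have m0 : 0 < m := mpos B mB PB0.
have tm0 : 0 <= t / m by apply: divr_ge0; lra.
pose x := (t / m) `^ p^-1.
have xnn : 0 <= x := powR_ge0 _ _.
have hx : x `^ p * m = t by rewrite pw_inv // divfK // gt_eqF.
have Lx : L <= x.
  apply: root_ge => //; first lra.
  rewrite ler_pdivlMr //.
  move: PBr; rewrite -/m /rr ltr_pdivlMr // mulrC => h; exact: ltW.
have xp : x <= x `^ p by apply: le1r_powR; lra.
pose c := K0 + x.
have c0 : 0 <= c by rewrite /c; lra.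
pose v := - (x `^ p / eps).
apply: (fin B c M' v K0 mB PB0).
- by move=> w /BA.
- exact: c0.
- apply: root_lt => //; first by apply: mulr_ge0; [exact: powR_ge0 | exact: ltW m0].
  have cp : c `^ p <= 2 `^ p * x `^ p.
    rewrite -powRM //; apply: ge0_ler_powR; rewrite ?nnegrE; try lra.
    by rewrite /c; lra.
  have xpm := powR_ge0 x p; have cp0 := powR_ge0 c p.
  have e2 := powR_gt0 p e0; have tw := powR_gt0 p (ltr0Sn R 1).
  rewrite -/m; nra.
- exact: uM'.
- have -> : (K0 - c = - x)%R by rewrite /c opprD addrA subrr add0r.
  have xN : N < x by lra.
  have /= := HN x xN.
  move: (unoo (- x)) (uM' (- x)); case: (u (- x)) => [r _ rM | // | _ _]; last first.
    by rewrite leNye.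
  rewrite -EFinM lee_fin => hr.
  have [r0|r0] := leP 0 r.
    move: rM hr; rewrite lee_fin ger0_norm // => rM hr.
    have hh : x `^ p <= eps * M' by apply: (le_trans hr); rewrite ler_pM2l.
    exfalso; exact: (@lin_contra R _ _ _ (le_trans LM Lx) xp hh).
  rewrite ltr0_norm // in hr.
  rewrite lee_fin /v lerNr ler_pdivrMr //; nra.
- rewrite -/m.
  have qm : x `^ p / eps * m = D.
    apply: (mulIf (lt0r_neq0 eps0)).
    by rewrite mulrAC divfK ?lt0r_neq0 // hx -he mulrC.
  rewrite /v mulrDl mulNr qm /D; have := mulr_ge0 M'0 (ltW m0); lra.
Qed.
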